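(* Let Assumption 1 hold and let $K_{\mathrm f}\in\mathbb{R}^{1\times 2n}$ be such that $A_{\mathrm f}+B_{\mathrm f}K_{\mathrm f}$ is Hurwitz. If the polynomial $s^n+c_1s^{n-1}+\dots+c_{n-1}s+c_n$ is Hurwitz, then the origin is globally asymptotically stable for the closed-loop system with state $(x,\zeta,\mu)\in\mathbb{R}^{3n}$ given by $\dot x=Ax+Bu$, $\dot\zeta=A_{\mathrm r}\zeta+B_{\mathrm r}u$, $\dot\mu=A_{\mathrm r}\mu+B_{\mathrm r}Cx$, $u=K_{\mathrm f}\,\mathrm{col}(\zeta,\mu)$.
   Context: Fix $n\ge 1$ and real numbers $a_1,\dots,a_n,b_1,\dots,b_n$. The plant is the continuous-time SISO system $y^{(n)}+a_1y^{(n-1)}+\dots+a_ny=b_1u^{(n-1)}+\dots+b_nu$, represented in observability canonical form $\dot x=Ax+Bu$, $y=Cx$, $x(t)\in\mathbb{R}^n$, where $C=[0_{1,n-1}\;1]$, $A$ is the $n\times n$ matrix whose first $n-1$ columns are $\begin{bmatrix}0_{1,n-1}\\ I_{n-1}\end{bmatrix}$ and whose last column is $(-a_n,\dots,-a_1)^\top$, and $B=(b_n,\dots,b_1)^\top$. Assumption 1: the polynomials $s^n+a_1s^{n-1}+\dots+a_n$ and $b_1s^{n-1}+\dots+b_n$ are coprime. For real parameters $c_1,\dots,c_n$, $A_{\mathrm r}\in\mathbb{R}^{n\times n}$ is the matrix whose first $n-1$ rows are $[0_{n-1,1}\;I_{n-1}]$ and whose last row is $(-c_n,\dots,-c_1)$,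 and $B_{\mathrm r}=(0,\dots,0,1)^\top\in\mathbb{R}^n$. Define $A_{\mathrm f}=\begin{bmatrix}A_{\mathrm r}&0_{n,n}\\ L_b& A_a\end{bmatrix}\in\mathbb{R}^{2n\times 2n}$, where $L_b\in\mathbb{R}^{n\times n}$ has all rows zero except the last, which equals $(b_n,\dots,b_1)$, and $A_a\in\mathbb{R}^{n\times n}$ has first $n-1$ rows $[0_{n-1,1}\;I_{n-1}]$ and last row $(-a_n,\dots,-a_1)$; and $B_{\mathrm f}=\mathrm{col}(0_{n-1,1},1,0_{n,1})\in\mathbb{R}^{2n}$. A square matrix is Hurwitz if all its eigenvalues have negative real part; a polynomial is Hurwitz if all its roots have negative real part. *)

(* Defs.v *)
From HB Require Import structures.
From mathcomp Require Import all_boot all_order all_algebra.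
From mathcomp Require Import all_classical all_reals all_analysis.
From mathcomp Require Import complex.
Set Implicit Arguments. Unset Strict Implicit. Unset Printing Implicit Defensive.
Import Order.TTheory GRing.Theory Num.Theory.
Import numFieldNormedType.Exports.
Local Open Scope ring_scope.
Local Open Scope classical_set_scope.

Section Defs.
Variable R : realType.

Definition cpoly (p : {poly R}) : {poly R[i]} :=
  map_poly (fun x : R => (x%:C)%C) p.

Definition hurwitz_poly (p : {poly R}) : Prop :=
  forall z : R[i], root (cpoly p) z -> complex.Re z < 0.

Definition hurwitz_mx (N : nat) (M : 'M[R]_N) : Prop :=
  hurwitz_poly (char_poly M).

(* Coefficients: a k, b k, c k stand for a_k, b_k, c_k (k = 1..n). *)
Definition den_poly (n : nat) (a : nat -> R) : {poly R} :=
  'X^n + \sum_(1 <= k < n.+1) (a k)%:P * 'X^(n - k).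
Definition num_poly (n : nat) (b : nat -> R) : {poly R} :=
  \sum_(1 <= k < n.+1) (b k)%:P * 'X^(n - k).

Definition Amat (n : nat) (a : nat -> R) : 'M[R]_n :=
  \matrix_(i < n, j < n)
    (if j == n.-1 :> nat then - a (n - i)%N
     else if i == j.+1 :> nat then 1 else 0).
Definition Bmat (n : nat) (b : nat -> R) : 'cV[R]_n :=
  \col_(i < n) b (n - i)%N.
Definition Cmat (n : nat) : 'rV[R]_n :=
  \row_(j < n) (if j == n.-1 :> nat then 1 else 0).

Definition comp_mx (n : nat) (c : nat -> R) : 'M[R]_n :=
  \matrix_(i < n, j < n)
    (if i == n.-1 :> nat then - c (n - j)%N
     else if j == i.+1 :> nat then 1 else 0).
Definition Ar (n : nat) (c : nat -> R) : 'M[R]_n := comp_mx n c.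
Definition Br (n : nat) : 'cV[R]_n :=
  \col_(i < n) (if i == n.-1 :> nat then 1 else 0).
Definition Lb (n : nat) (b : nat -> R) : 'M[R]_n :=
  \matrix_(i < n, j < n) (if i == n.-1 :> nat then b (n - j)%N else 0).
Definition Aa (n : nat) (a : nat -> R) : 'M[R]_n := comp_mx n a.

Definition Af (n : nat) (a b c : nat -> R) : 'M[R]_(n + n) :=
  block_mx (Ar n c) 0 (Lb n b) (Aa n a).
Definition Bf (n : nat) : 'cV[R]_(n + n) := col_mx (Br n) 0.

Definition is_solution (N : nat) (f : 'cV[R]_N -> 'cV[R]_N) (phi : R -> 'cV[R]_N) : Prop :=
  (forall t : R, 0 < t -> is_derive t 1 phi (f (phi t))) /\
  phi x @[x --> (0:R)^'+] --> phi 0.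

Definition GAS (N : nat) (f : 'cV[R]_N -> 'cV[R]_N) : Prop :=
  (forall eps : R, 0 < eps -> exists2 delta : R, 0 < delta &
     forall phi, is_solution f phi -> `|phi 0| < delta ->
       forall t, 0 <= t -> `|phi t| < eps) /\
  (forall phi, is_solution f phi -> phi t @[t --> +oo] --> (0 : 'cV[R]_N)).

Definition closed_loop (n : nat) (a b c : nat -> R) (Kf : 'M[R]_(1, n + n))
  (z : 'cV[R]_(n + (n + n))) : 'cV[R]_(n + (n + n)) :=
  let x := usubmx z in
  let w := dsubmx z in
  let zeta := usubmx w in
  let mu := dsubmx w in
  let u := Kf *m col_mx zeta mu in
  col_mx (Amat n a *m x + Bmat n b *m u)
         (col_mx (Ar n c *m zeta + Br n *m u)
                 (Ar n c *m mu + Br n *m (Cmat n *m x))).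

End Defs.
Arguments closed_loop {R} n a b c Kf z.
Arguments Bf {R} n.

(* Main.v *)
Require Import Defs.
From HB Require Import structures.
From mathcomp Require Import all_boot all_order all_algebra.
From mathcomp Require Import all_classical all_reals all_analysis.
From mathcomp Require Import complex.
From mathcomp Require Import ring lra zify.
Import Order.TTheory GRing.Theory Num.Theory.
Import numFieldNormedType.Exports.
Set Implicit Arguments. Unset Strict Implicit. Unset Printing Implicit Defensive.
Local Open Scope ring_scope.

Section DI.
Variable R : realType.

Lemma is_derive_expRs (sig t : R) :
  is_derive t 1 (fun s => expR (sig * s)) (sig * expR (sig * t)).
Proof.
have h1 : is_derive t (1:R) (fun s : R => sig * s) sig.
  have := @is_deriveZ R R R id sig t 1 1 (is_derive_id _ _).
  by rewrite /= scaler1.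
have := is_derive1_comp (is_derive_expR (sig * t)) h1.
by rewrite mulrC.
Qed.

Lemma DI_bound (f df k : R -> R) (sig K t0 : R) : 0 < sig -> 0 <= t0 ->
  (forall t : R, 0 < t -> is_derive t 1 f (df t)) ->
  (f x @[x --> (0:R)^'+] --> f 0)%classic ->
  (forall t : R, 0 < t -> df t <= - sig * f t + k t) ->
  (forall t : R, t0 < t -> k t <= K) ->
  forall t : R, t0 <= t -> f t - K / sig <= expR (- (sig * (t - t0))) * (f t0 - K / sig).
Proof.
move=> sig0 t00 Hd Hc Hle Hk t tt0.
pose g s := expR (sig * s) * (f s - K / sig).
have dg : forall s : R, 0 < s -> is_derive s 1 g
   (expR (sig * s) * df s + (f s - K / sig) * (sig * expR (sig * s))).
  move=> s s0.
  have hb : is_derive s (1:R) (fun s => f s - K / sig) (df s).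
    have := @is_deriveB R R R f (cst (K / sig)) s 1 (df s) 0 (Hd s s0) (is_derive_cst _ _ _).
    by rewrite subr0.
  exact: (@is_deriveM R R (fun s => expR (sig * s)) (fun s => f s - K / sig) s 1
     (sig * expR (sig * s)) (df s) (is_derive_expRs sig s) hb).
have dgle : forall s : R, s \in `]t0, +oo[ -> g^`()%classic s <= 0.
  move=> s; rewrite in_itv /= andbT => st0.
  have s0 : 0 < s by apply: le_lt_trans st0.
  rewrite derive1E (@derive_val _ _ _ _ _ _ _ (dg s s0)).
  have := Hle s s0; have := Hk s st0; have := expR_gt0 (sig * s).
  set e := expR (sig * s) => e0 h1 h2.
  have -> : e * df s + (f s - K / sig) * (sig * e) = e * (df s + sig * f s - K).
    by field; rewrite gt_eqF.
  rewrite pmulr_rle0 //. 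
  lra.
have dgd : forall s : R, s \in `]t0, +oo[ -> derivable g s 1.
  move=> s; rewrite in_itv /= andbT => st0.
  by have [] := dg s (le_lt_trans t00 st0).
have gc : {within `[t0, +oo[, continuous g}%classic.
  apply: derivable_oy_Rcontinuous_within_itvcy; split.
    by move=> s /dgd.
  have [t0e|t0p] := eqVneq t0 0.
    rewrite t0e /g; apply: cvgM.
      apply: cvg_at_right_filter.
      have hd : derivable (fun s : R => expR (sig * s)) 0 1.
        by have [] := is_derive_expRs sig 0.
      exact: (differentiable_continuous ((derivable1_diffP _ _).1 hd)).
    by apply: cvgB => //; exact: cvg_cst.
  have t0p' : 0 < t0 by rewrite lt_neqAle eq_sym t0p.
  apply: cvg_at_right_filter.
  have [hd _] := dg t0 t0p'.
  by apply/differentiable_continuous/derivable1_diffP.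
have := ler0_derive1_nincry dgd dgle gc (lexx t0) tt0.
rewrite /g => H.
have et : 0 < expR (- (sig * t)) by exact: expR_gt0.
have := ler_wpM2l (ltW et) H.
rewrite mulrA -expRD addNr expR0 mul1r => H2.
apply: (le_trans H2); rewrite mulrA -expRD; have -> : - (sig * t) + sig * t0 = - (sig * (t - t0)) by ring.
by [].
Qed.

Lemma expR_N_le1 (x : R) : 0 <= x -> expR (- x) <= 1.
Proof. by move=> x0; rewrite expR_le1 oppr_le0. Qed.

Lemma DI_stab (f df k : R -> R) (sig K : R) : 0 < sig -> 0 <= K ->
  (forall t : R, 0 < t -> is_derive t 1 f (df t)) ->
  (f x @[x --> (0:R)^'+] --> f 0)%classic ->
  (forall t : R, 0 < t -> df t <= - sig * f t + k t) ->
  (forall t : R, 0 < t -> k t <= K) -> 0 <= f 0 ->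
  forall t : R, 0 <= t -> f t <= f 0 + K / sig.
Proof.
move=> s0 K0 Hd Hc Hle Hk f0 t t0.
have := DI_bound s0 (lexx 0) Hd Hc Hle Hk t0.
rewrite subr0.
have e0 := expR_gt0 (- (sig * t)).
have e1 := expR_N_le1 (mulr_ge0 (ltW s0) t0).
have Ks : 0 <= K / sig by rewrite divr_ge0 // ltW.
move: (expR (- (sig * t))) e0 e1 => e e0 e1; set Q := K / sig in Ks *.
move=> H; nra.
Qed.

Lemma DI_lim (f df k : R -> R) (sig : R) : 0 < sig ->
  (forall t : R, 0 < t -> is_derive t 1 f (df t)) ->
  (f x @[x --> (0:R)^'+] --> f 0)%classic ->
  (forall t : R, 0 < t -> df t <= - sig * f t + k t) ->
  (forall e : R, 0 < e -> exists T : R, forall t : R, T <= t -> k t <= e) ->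
  (forall e : R, 0 < e -> exists T : R, forall t : R, T <= t -> f t <= e).
Proof.
move=> s0 Hd Hc Hle Hk e e0.
have se0 : 0 < sig * e / 2 by rewrite divr_gt0 // mulr_gt0.
have [T1 HT1] := Hk _ se0.
pose t0 := Num.max T1 0 + 1.
have t0T1 : T1 < t0 by rewrite /t0 ltr_pwDr // le_max lexx.
have t00 : 0 <= t0 by rewrite /t0 addr_ge0 // le_max lexx orbT.
have Hk' : forall t : R, t0 < t -> k t <= sig * e / 2.
  by move=> t tt0; apply: HT1; apply: ltW; apply: lt_trans tt0.
have HB := DI_bound s0 t00 Hd Hc Hle Hk'.
pose A := `|f t0 - e / 2|.
exists (t0 + 2 * A / (sig * e)) => t tT.
have tt0 : t0 <= t.
  apply: le_trans tT; rewrite lerDl; apply: divr_ge0; [apply: mulr_ge0 =>//; exact: normr_ge0 | apply: mulr_ge0; exact: ltW].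
have := HB t tt0.
have -> : sig * e / 2 / sig = e / 2 by field; rewrite gt_eqF.
have A0 : 0 <= A by exact: normr_ge0.
set x := sig * (t - t0).
have x0 : 0 <= x by rewrite /x; apply: mulr_ge0; [exact: ltW | rewrite subr_ge0].
have ex := expR_gt0 (- x).
have hE1 : expR (- x) * (1 + x) <= 1.
  have := expR_ge1Dx x; have := expRxMexpNx_1 x; move: (expR x) => X; nra.
have xA : 2 * A <= e * x.
  rewrite /x; have tT2 : 2 * A / (sig * e) <= t - t0 by lra.
  have : 2 * A / (sig * e) * (sig * e) <= (t - t0) * (sig * e).
    by rewrite ler_wpM2r // ltW // mulr_gt0.
  rewrite divfK ?gt_eqF ?mulr_gt0 // => H; have -> : e * (sig * (t - t0)) = (t - t0) * (sig * e) by ring.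
  exact: H.
have hA : expR (- x) * (f t0 - e / 2) <= expR (- x) * A.
  by apply: ler_wpM2l; [exact: ltW | exact: ler_norm].
move: hA hE1 ex; move: (expR (- x)) => E hA E1 E0 H.
nra.
Qed.

End DI.

Section Sol.
Variables (R : realType) (N : nat).
Local Open Scope classical_set_scope.

Lemma entry_derive (phi : R -> 'cV[R]_N) (t : R) (d : 'cV[R]_N) :
  is_derive t 1 phi d -> forall j, is_derive t 1 (fun s => phi s j 0) (d j 0).
Proof.
move=> H j; have Hd : derivable phi t 1 by case: H.
apply: DeriveDef; first exact: ((derivable_mxP phi t 1).1 Hd j 0).
have := derive_mx Hd; rewrite (@derive_val _ _ _ _ _ _ _ H).
by move=> /matrixP /(_ j 0); rewrite mxE => <-.
Qed.

Lemma row_derive (U : 'M[R]_N) i (phi : R -> 'cV[R]_N) (t : R) (d : 'cV[R]_N) :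
  is_derive t 1 phi d -> is_derive t 1 (fun s => (U *m phi s) i 0) ((U *m d) i 0).
Proof.
move=> H.
have -> : (fun s => (U *m phi s) i 0) = \sum_(j < N) (fun s => U i j * phi s j 0).
  by rewrite fct_sumE; apply: funext => s; rewrite mxE.
rewrite mxE; apply: is_derive_sum => j.
exact: (is_deriveZ (U i j) (entry_derive H j)).
Qed.

Lemma cvg_sum_seq (T : Type) (F : set_system T) (FF : Filter F) (I : Type) (r : seq I)
  (G : I -> T -> R) (l : I -> R) :
  (forall j, G j x @[x --> F] --> l j) ->
  (\sum_(j <- r) G j x) @[x --> F] --> \sum_(j <- r) l j.
Proof.
move=> H; elim: r => [|j r IH].
  rewrite big_nil; under eq_fun do rewrite big_nil; exact: cvg_cst.
rewrite big_cons; under eq_fun do rewrite big_cons.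
exact: (cvgD (H j) IH).
Qed.

Lemma row_lim (U : 'M[R]_N) i (phi : R -> 'cV[R]_N) (a : R) :
  phi x @[x --> a^'+] --> phi a ->
  (U *m phi x) i 0 @[x --> a^'+] --> (U *m phi a) i 0.
Proof.
move=> H.
under eq_fun do rewrite mxE.
rewrite mxE; apply: cvg_sum_seq => j.
apply: cvgM; first exact: cvg_cst.
exact: (continuous_cvg _ (@coord_continuous R N 1 j 0 (phi a)) H).
Qed.

End Sol.

Section Chain.
Variables (R : realType) (N : nat) (M : 'M[R]_N).
Local Open Scope classical_set_scope.

Lemma entry_le_norm (x : 'cV[R]_N) j : `|x j 0| <= `|x|.
Proof.
rewrite [X in _ <= X]/Num.Def.normr /= mx_normrE.
exact: (le_bigmax _ (fun ij : 'I_N * 'I_1 => `|x ij.1 ij.2|) (j, 0)).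
Qed.

Definition rho (W : 'M[R]_N) := \sum_(i < N) \sum_(j < N) `|W i j|.

Lemma rho_ge0 W : 0 <= rho W.
Proof. by apply: sumr_ge0 => i _; apply: sumr_ge0 => j _. Qed.

Lemma row_bound (W : 'M[R]_N) i (x : 'cV[R]_N) :
  (W *m x) i 0 ^+ 2 <= rho W ^+ 2 * `|x| ^+ 2.
Proof.
have h1 : `|(W *m x) i 0| <= rho W * `|x|.
  rewrite mxE; apply: le_trans (ler_norm_sum _ _ _) _.
  apply: (@le_trans _ _ (\sum_(j < N) `|W i j| * `|x|)).
    apply: ler_sum => j _; rewrite normrM ler_wpM2l //; exact: entry_le_norm.
  rewrite -mulr_suml ler_wpM2r //.
  rewrite /rho [X in _ <= X](bigD1 i) //= lerDl; apply: sumr_ge0 => k _; apply: sumr_ge0 => j _; exact: normr_ge0.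
have h0 : 0 <= `|(W *m x) i 0| by [].
have hr := rho_ge0 W; have hx : 0 <= `|x| by [].
rewrite -real_normK ?num_real //.
move: h1 h0 hr hx; move: `|(W *m x) i 0| (rho W) `|x| => a b c; nra.
Qed.

Definition sq2 (U V : 'M[R]_N) (phi : R -> 'cV[R]_N) i (t : R) :=
  (U *m phi t) i 0 ^+ 2 + (V *m phi t) i 0 ^+ 2.

Definition good (U V : 'M[R]_N) := exists C : R, 0 <= C /\
  forall phi : R -> 'cV[R]_N, is_solution (fun z => M *m z) phi -> forall i,
   (forall t : R, 0 <= t -> sq2 U V phi i t <= C * `|phi 0| ^+ 2) /\
   (forall e : R, 0 < e -> exists T : R, forall t : R, T <= t -> sq2 U V phi i t <= e).

Lemma good0 : good 0 0.
Proof.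
exists 0; split => // phi _ i; rewrite /sq2; split.
  by move=> t _; rewrite !mul0mx !mxE mul0r expr0n /= addr0.
by move=> e e0; exists 0 => t _; rewrite !mul0mx !mxE expr0n /= addr0 ltW.
Qed.


Lemma good_step (U V U' V' : 'M[R]_N) (al be : R) : al < 0 ->
  U *m M = al *: U - be *: V + U' -> V *m M = be *: U + al *: V + V' ->
  good U' V' -> good U V.
Proof.
move=> al0 eU eV [C' [C'0 HC']].
pose sig := - al; have s0 : 0 < sig by rewrite /sig oppr_gt0.
exists (rho U ^+ 2 + rho V ^+ 2 + C' / sig ^+ 2); split.
  by rewrite !addr_ge0 ?sqr_ge0 // divr_ge0 // sqr_ge0.
move=> phi Hphi i; case: (Hphi) => Hd Hc; have [HB HL] := HC' phi Hphi i.
pose u s := (U *m phi s) i 0; pose v s := (V *m phi s) i 0.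
pose p s := (U' *m phi s) i 0; pose q s := (V' *m phi s) i 0.
pose f s := u s * u s + v s * v s.
have fE : forall s, sq2 U V phi i s = f s by move=> s; rewrite /sq2 !expr2.
pose k s := sq2 U' V' phi i s / sig.
have du : forall t : R, 0 < t -> is_derive t 1 u (al * u t - be * v t + p t).
  move=> t t0; apply: is_derive_eq; first exact: (row_derive U i (Hd t t0)).
  rewrite mulmxA eU !mulmxDl mulNmx -!scalemxAl /u /v /p.
  by move: (U *m phi t) (V *m phi t) (U' *m phi t) => A B C; rewrite !mxE.
have dv : forall t : R, 0 < t -> is_derive t 1 v (be * u t + al * v t + q t).
  move=> t t0; apply: is_derive_eq; first exact: (row_derive V i (Hd t t0)).
  rewrite mulmxA eV !mulmxDl -!scalemxAl /u /v /q.
  by move: (U *m phi t) (V *m phi t) (V' *m phi t) => A B C; rewrite !mxE.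
pose df t := 2 * u t * (al * u t - be * v t + p t) + 2 * v t * (be * u t + al * v t + q t).
have Hdf : forall t : R, 0 < t -> is_derive t 1 f (df t).
  move=> t t0.
  have H : is_derive t 1 (u * u + v * v) _ := is_deriveD (is_deriveM (du t t0) (du t t0)) (is_deriveM (dv t t0) (dv t t0)).
  have H2 : is_derive t 1 f _ := H.
  apply: (is_derive_eq H2).
  by rewrite /df /= /GRing.scale /=; ring.
have Hcf : (f x @[x --> (0:R)^'+] --> f 0).
  apply: cvgD; apply: cvgM; exact: row_lim.
have Hle : forall t : R, 0 < t -> df t <= - sig * f t + k t.
  move=> t _; rewrite /df /f /k /sq2 -/(p t) -/(q t).
  have e1 : sig * (sq2 U' V' phi i t / sig) = p t ^+ 2 + q t ^+ 2.
    by rewrite /sq2 mulrC divfK // gt_eqF.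
  rewrite /sq2 in e1.
  move: e1; set w := (_ / sig) => e1.
  have h1 := sqr_ge0 (sig * u t - p t); have h2 := sqr_ge0 (sig * v t - q t).
  have ea : al = - sig by rewrite /sig opprK.
  rewrite ea.
  move: (u t) (v t) (p t) (q t) h1 h2 e1 => a b c d h1 h2 e1.
  nra.
split.
  move=> t t0; rewrite fE.
  pose K := C' * `|phi 0| ^+ 2 / sig.
  have Hk : forall t : R, 0 < t -> k t <= K.
    move=> s s_0; rewrite /k /K ler_pM2r ?invr_gt0 //; exact: HB (ltW s_0).
  have f0 : 0 <= f 0 by rewrite /f addr_ge0 // -expr2 sqr_ge0.
  have K0 : 0 <= K by rewrite /K divr_ge0 ?mulr_ge0 ?sqr_ge0 // ltW.
  have := DI_stab s0 K0 Hdf Hcf Hle Hk f0 t0.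
  have hu := row_bound U i (phi 0); have hv := row_bound V i (phi 0).
  have -> : K / sig = C' / sig ^+ 2 * `|phi 0| ^+ 2.
    by rewrite /K; field; rewrite gt_eqF.
  rewrite /f -!expr2 -/(u 0) -/(v 0) => H; apply: (le_trans H).
  rewrite !mulrDl lerD2r; exact: lerD.
move=> e e0.
have Hk : forall e : R, 0 < e -> exists T : R, forall t : R, T <= t -> k t <= e.
  move=> e1 e10; have [T HT] := HL (e1 * sig) (mulr_gt0 e10 s0).
  exists T => t tT; rewrite /k ler_pdivrMr //; exact: HT.
have [T HT] := DI_lim s0 Hdf Hcf Hle Hk e0.
by exists T => t tT; rewrite fE; exact: HT.
Qed.

End Chain.

Section GASgood.
Variables (R : realType) (N : nat) (M : 'M[R]_N).
Local Open Scope classical_set_scope.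

Lemma GAS_of_good : good M 1 0 -> GAS (fun z => M *m z).
Proof.
move=> [C [C0 HC]].
have E : forall (phi : R -> 'cV[R]_N) i t, sq2 1 0 phi i t = phi t i 0 ^+ 2.
  by move=> phi i t; rewrite /sq2 mul1mx mul0mx mxE expr0n /= addr0.
split.
  move=> eps eps0; exists (eps / (C + 1)).
    by rewrite divr_gt0 // ltr_wpDl.
  move=> phi Hphi Hp0 t t0.
  have Hn0 : 0 <= `|phi 0| by [].
  rewrite [X in X < _]/Num.Def.normr /= mx_normrE.
  apply: bigmax_lt => // -[j j0] _ /=.
  have [H _] := HC phi Hphi j; have := H t t0; rewrite E => Hj.
  have C1 : 0 < C + 1 by rewrite ltr_wpDl.
  have hd : `|phi 0| * (C + 1) < eps by rewrite -ltr_pdivlMr.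
  have ha : 0 <= `|phi t j j0| by [].
  rewrite (ord1 j0) in ha *.
  rewrite -real_normK ?num_real // in Hj.
  move: Hj hd ha Hn0; move: `|phi t j 0| `|phi 0| => a b Hj hd ha hb.
  have h1 : C * b ^+ 2 <= (b * (C + 1)) ^+ 2 by nra.
  have h0 : 0 <= b * (C + 1) by nra.
  have h2 : (b * (C + 1)) ^+ 2 < eps ^+ 2 by nra.
  nra.
move=> phi Hphi.
apply/cvgrPdist_lt => e e0.
have e20 : 0 < e / 2 by rewrite divr_gt0.
have H : forall j : 'I_N, \forall t \near +oo, phi t j 0 ^+ 2 <= (e / 2) ^+ 2.
  move=> j; have [_ HL] := HC phi Hphi j.
  have [T HT] := HL _ (exprn_gt0 2 e20).
  exists T; split; first by rewrite num_real.
  by move=> t tT; rewrite -E; apply: HT; apply: ltW.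
near=> t.
rewrite sub0r normrN.
apply: (@le_lt_trans _ _ (e / 2)); last by rewrite ltr_pdivrMr // ltr_pMr // ltr1n.
rewrite [X in X <= _]/Num.Def.normr /= mx_normrE.
apply: bigmax_le => [|[j j0] _ /=]; first exact: ltW.
rewrite (ord1 j0).
have Hj : phi t j 0 ^+ 2 <= (e / 2) ^+ 2.
  by move: j; near: t; apply: filter_forall.
rewrite -real_normK ?num_real // in Hj.
have ha : 0 <= `|phi t j 0| by [].
move: Hj ha; move: `|phi t j 0| => a Hj ha; nra.
Unshelve. all: by end_near.
Qed.

End GASgood.

Section Cplx.
Variable R : realType.
Local Open Scope complex_scope.

Lemma ReMr (a : R[i]) (x : R) : complex.Re (a * real_complex R x) = complex.Re a * x.
Proof. by case: a => a b /=; rewrite mulr0 subr0. Qed.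
Lemma ImMr (a : R[i]) (x : R) : complex.Im (a * real_complex R x) = complex.Im a * x.
Proof. by case: a => a b /=; rewrite mulr0 add0r. Qed.
Lemma ReM (a b : R[i]) : complex.Re (a * b) = complex.Re a * complex.Re b - complex.Im a * complex.Im b.
Proof. by case: a => a1 a2; case: b => b1 b2. Qed.
Lemma ImM (a b : R[i]) : complex.Im (a * b) = complex.Re a * complex.Im b + complex.Im a * complex.Re b.
Proof. by case: a => a1 a2; case: b => b1 b2. Qed.

Variables (N' : nat) (M : 'M[R]_N'.+1).
Local Notation Mc := (map_mx (real_complex R) M).

Lemma mapRe_mul (A : 'M[R[i]]_N'.+1) : map_mx (@complex.Re R) (A *m Mc) = map_mx (@complex.Re R) A *m M.
Proof.
apply/matrixP => i j; rewrite !mxE raddf_sum; apply: eq_bigr => k _.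
  rewrite !mxE; exact: ReMr.
Qed.
Lemma mapIm_mul (A : 'M[R[i]]_N'.+1) : map_mx (@complex.Im R) (A *m Mc) = map_mx (@complex.Im R) A *m M.
Proof.
apply/matrixP => i j; rewrite !mxE raddf_sum; apply: eq_bigr => k _.
rewrite !mxE; exact: ImMr.
Qed.


Lemma mapRe_scale (r : R[i]) (A : 'M[R[i]]_N'.+1) :
  map_mx (@complex.Re R) (r *: A) =
  complex.Re r *: map_mx (@complex.Re R) A - complex.Im r *: map_mx (@complex.Im R) A.
Proof. by apply/matrixP => i j; rewrite !mxE; exact: ReM. Qed.
Lemma mapIm_scale (r : R[i]) (A : 'M[R[i]]_N'.+1) :
  map_mx (@complex.Im R) (r *: A) =
  complex.Im r *: map_mx (@complex.Re R) A + complex.Re r *: map_mx (@complex.Im R) A.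
Proof. by apply/matrixP => i j; rewrite !mxE ImM addrC mulrC. Qed.
Lemma mapRe_add (A B : 'M[R[i]]_N'.+1) :
  map_mx (@complex.Re R) (A + B) = map_mx (@complex.Re R) A + map_mx (@complex.Re R) B.
Proof. by apply/matrixP => i j; rewrite !mxE; case: (A i j); case: (B i j). Qed.
Lemma mapIm_add (A B : 'M[R[i]]_N'.+1) :
  map_mx (@complex.Im R) (A + B) = map_mx (@complex.Im R) A + map_mx (@complex.Im R) B.
Proof. by apply/matrixP => i j; rewrite !mxE; case: (A i j); case: (B i j). Qed.

Theorem hurwitz_GAS : hurwitz_mx M -> GAS (fun z => M *m z).
Proof.
move=> HM; apply: GAS_of_good.
have [rs Hrs] := closed_field_poly_normal (char_poly Mc).
have lc : lead_coef (char_poly Mc) = 1 by apply/monicP; exact: char_poly_monic.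
rewrite lc scale1r in Hrs.
have Hre : forall z, z \in rs -> complex.Re z < 0.
  move=> z zin; apply: HM; rewrite /cpoly.
  have -> : map_poly (fun x : R => (x%:C)%C) (char_poly M) = char_poly Mc.
    exact: (map_char_poly (real_complex R) M).
  by rewrite Hrs root_prod_XsubC.
pose r j := nth 0 rs j.
pose P k := \prod_(j < k) (Mc - (r j)%:M).
have PN : P (size rs) = 0.
  have := Cayley_Hamilton Mc; rewrite Hrs rmorph_prod (big_nth 0) big_mkord.
  move=> <-; apply: eq_bigr => j _.
  by rewrite rmorphB /= horner_mx_X horner_mx_C.
have rel : forall k, P k *m Mc = r k *: P k + P k.+1.
  move=> k; rewrite /P big_ord_recr /= -/(P k) mulmxE mulrBr -mulmxE mul_mx_scalar.
  by rewrite addrC subrK.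
pose U k := map_mx (@complex.Re R) (P k).
pose V k := map_mx (@complex.Im R) (P k).
have eU : forall k, U k *m M = complex.Re (r k) *: U k - complex.Im (r k) *: V k + U k.+1.
  by move=> k; rewrite /U -mapRe_mul rel mapRe_add mapRe_scale.
have eV : forall k, V k *m M = complex.Im (r k) *: U k + complex.Re (r k) *: V k + V k.+1.
  by move=> k; rewrite /V -mapIm_mul rel mapIm_add mapIm_scale.
have key : forall m, (m <= size rs)%N -> good M (U (size rs - m)%N) (V (size rs - m)%N).
  elim=> [|m IH] hm.
    rewrite subn0 /U /V PN.
    have -> : map_mx (@complex.Re R) (0 : 'M[R[i]]_N'.+1) = 0.
      by apply/matrixP => i j; rewrite !mxE.
    have -> : map_mx (@complex.Im R) (0 : 'M[R[i]]_N'.+1) = 0.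
      by apply/matrixP => i j; rewrite !mxE.
    exact: good0.
  have hk : (size rs - m = (size rs - m.+1).+1)%N by rewrite subnSK.
  have := IH (ltnW hm); rewrite hk => Hg.
  apply: (good_step _ (eU _) (eV _) Hg).
  apply: Hre; apply: mem_nth; rewrite ltn_subrL; apply/andP; split => //.
  by apply: leq_ltn_trans hm.
have := key (size rs) (leqnn _); rewrite subnn /U /V /P big_ord0.
have -> : map_mx (@complex.Re R) (1 : 'M[R[i]]_N'.+1) = 1.
  by apply/matrixP => i j; rewrite !mxE; case: (i == j).
have -> : map_mx (@complex.Im R) (1 : 'M[R[i]]_N'.+1) = 0.
  by apply/matrixP => i j; rewrite !mxE; case: (i == j).
by [].
Qed.
End Cplx.

Section Alg.
Variable R : realType.

Lemma sum_rev (n : nat) (F : nat -> {poly R}) :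
  \sum_(1 <= k < n.+1) F k = \sum_(i < n) F (n - i)%N.
Proof.
rewrite big_nat_rev big_add1 /= big_mkord; apply: eq_bigr => i _.
congr F; have := ltn_ord i; lia.
Qed.

Lemma den_polyE (n : nat) (c : nat -> R) :
  den_poly n c = 'X^n + \poly_(i < n) c (n - i)%N.
Proof.
rewrite /den_poly sum_rev poly_def; congr (_ + _); apply: eq_bigr => i _.
by rewrite mul_polyC subKn // ltnW.
Qed.

Lemma size_den (n : nat) (c : nat -> R) : size (den_poly n c) = n.+1.
Proof.
rewrite den_polyE size_polyDl size_polyXn //.
by apply: leq_ltn_trans (size_poly _ _) _.
Qed.

Lemma monic_den (n : nat) (c : nat -> R) : den_poly n c \is monic.
Proof.
apply/monicP; rewrite den_polyE lead_coefDl ?lead_coefXn // size_polyXn.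
by apply: leq_ltn_trans (size_poly _ _) _.
Qed.

Lemma coef_den (n : nat) (c : nat -> R) j : (j < n)%N -> (den_poly n c)`_j = c (n - j)%N.
Proof.
by move=> jn; rewrite den_polyE coefD coefXn coef_poly jn (ltn_eqF jn) add0r.
Qed.

Lemma horner_den (n : nat) (c : nat -> R) (s : R) :
  (den_poly n c).[s] = s ^+ n + \sum_(i < n) c (n - i)%N * s ^+ i.
Proof.
rewrite den_polyE hornerD hornerXn poly_def horner_sum; congr (_ + _).
by apply: eq_bigr => i _; rewrite hornerZ hornerXn.
Qed.

Lemma char_poly_cast (p : {poly R}) (n : nat) (e : (size p).-1 = n) :
  char_poly (castmx (e, e) (companionmx p)) = char_poly (companionmx p).
Proof. by case: n / e. Qed.

Lemma char_poly_comp (n : nat) (c : nat -> R) : char_poly (comp_mx n c) = den_poly n c.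
Proof.
have e : (size (den_poly n c)).-1 = n by rewrite size_den.
have -> : comp_mx n c = castmx (e, e) (companionmx (den_poly n c)).
  apply/matrixP => i j; rewrite castmxE !mxE /=.
  rewrite size_den /=.
  case: ifP => _; first by rewrite coef_den.
  by rewrite eq_sym; case: (_ == _).
by rewrite char_poly_cast companionmxK // monic_den.
Qed.


Lemma char_poly_eval (m : nat) (X : 'M[R]_m) (s : R) : (char_poly X).[s] = \det (s%:M - X).
Proof.
rewrite /char_poly -horner_evalE -det_map_mx; congr (\det _).
apply/matrixP => i j; rewrite !mxE /= horner_evalE.
by rewrite hornerD hornerN hornerMn hornerX hornerC.
Qed.

Definition vv (n : nat) (s : R) : 'cV[R]_n := \col_(i < n) s ^+ i.

Lemma sum_delta (n : nat) (i : 'I_n) (F : 'I_n -> R) :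
  \sum_(j < n) (i == j)%:R * F j = F i.
Proof.
rewrite (bigD1 i) //= eqxx mul1r big1 ?addr0 // => j ji.
by rewrite eq_sym (negPf ji) mul0r.
Qed.

Lemma comp_v (n : nat) (c : nat -> R) (s : R) : (0 < n)%N ->
  (s%:M - comp_mx n c) *m vv n s = (den_poly n c).[s] *: Br R n.
Proof.
move=> n0; apply/matrixP => i k; rewrite (ord1 k) !mxE horner_den.
have -> : \sum_(j < n) (s%:M - comp_mx n c) i j * vv n s j 0 =
   \sum_(j < n) (i == j)%:R * (s * s ^+ j) - \sum_(j < n) comp_mx n c i j * s ^+ j.
  rewrite -sumrB; apply: eq_bigr => j _; rewrite !mxE.
  by rewrite mulrBl mulr_natl mulrnAl.
rewrite sum_delta.
case: (eqVneq (i : nat) n.-1) => hi.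
  have -> : \sum_(j < n) comp_mx n c i j * s ^+ j = - \sum_(j < n) c (n - j)%N * s ^+ j.
    rewrite -sumrN; apply: eq_bigr => j _; rewrite mxE hi eqxx mulNr //.
  by rewrite opprK mulr1 -exprS hi prednK.
have hi1 : (i.+1 < n)%N.
  by move: (ltn_ord i) hi; lia.
have -> : \sum_(j < n) comp_mx n c i j * s ^+ j = s ^+ i.+1.
  rewrite (bigD1 (Ordinal hi1)) //= mxE (negPf hi) eqxx mul1r big1 ?addr0 // => j jn.
  rewrite mxE (negPf hi); case: ifP; last by rewrite mul0r.
  by move=> /eqP hj; exfalso; move: jn; apply/negP/negPn/eqP/val_inj.
by rewrite -exprS subrr mulr0.
Qed.

Lemma det_rank1 (m : nat) (X : 'M[R]_m) (bb : 'cV[R]_m) (kk : 'rV[R]_m) :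
  X \in unitmx -> \det (X - bb *m kk) = \det X * (1 - (kk *m invmx X *m bb) 0 0).
Proof.
move=> uX.
have E1 : block_mx (1 : 'M[R]_1) kk bb X = block_mx 1 0 bb 1 *m block_mx 1 kk 0 (X - bb *m kk).
  by rewrite mulmx_block ?mul1mx ?mul0mx ?mulmx1 ?mulmx0 ?addr0 ?add0r addrC subrK.
have E2 : block_mx (1 : 'M[R]_1) kk bb X =
    block_mx (1 - kk *m invmx X *m bb) (kk *m invmx X) 0 1 *m block_mx 1 0 bb X.
  by rewrite mulmx_block ?mul1mx ?mul0mx ?mulmx1 ?mulmx0 ?addr0 ?add0r subrK -mulmxA mulVmx // mulmx1.
have := congr1 determinant E1; rewrite E2 !det_mulmx det_lblock det_ublock.
rewrite det_lblock det_ublock !det1 !mul1r !mulr1 det_mx11 => <-.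
by rewrite mulrC !mxE.
Qed.

Lemma AmatE (n : nat) (a : nat -> R) : Amat n a = (comp_mx n a)^T.
Proof. by apply/matrixP => i j; rewrite !mxE. Qed.

Lemma CmatE (n : nat) : Cmat R n = (Br R n)^T.
Proof. by apply/matrixP => i j; rewrite !mxE. Qed.

Lemma vA (n : nat) (a : nat -> R) (s : R) : (0 < n)%N ->
  (vv n s)^T *m (s%:M - Amat n a) = (den_poly n a).[s] *: Cmat R n.
Proof.
move=> n0; rewrite AmatE CmatE.
have -> : s%:M - (comp_mx n a)^T = (s%:M - comp_mx n a)^T by rewrite linearB /= tr_scalar_mx.
by rewrite -trmx_mul comp_v // linearZ.
Qed.

Definition brow (n : nat) (b : nat -> R) : 'rV[R]_n := \row_(j < n) b (n - j)%N.

Lemma LbE (n : nat) (b : nat -> R) : Lb n b = Br R n *m brow n b.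
Proof.
apply/matrixP => i j; rewrite !mxE big_ord1 !mxE.
by case: (_ == _); rewrite ?mul1r ?mul0r.
Qed.

End Alg.

Section Main.
Variables (R : realType) (n : nat) (a b c : nat -> R) (Kf : 'M[R]_(1, n + n)).
Hypothesis n0 : (0 < n)%N.

Definition Mcl : 'M[R]_(n + (n + n)) :=
  block_mx (Amat n a) (Bmat n b *m Kf) (col_mx 0 (Br R n *m Cmat R n))
           (block_mx (Ar n c) 0 0 (Ar n c) + col_mx (Br R n) 0 *m Kf).
Definition Acl : 'M[R]_(n + n) := Af n a b c + Bf n *m Kf.

Lemma sub_block (m1 m2 : nat) (s : R) (P : 'M[R]_m1) Q Rr (S : 'M[R]_m2) :
  s%:M - block_mx P Q Rr S = block_mx (s%:M - P) (- Q) (- Rr) (s%:M - S).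
Proof. by rewrite scalar_mx_block opp_block_mx add_block_mx !sub0r. Qed.

Lemma inv_apply (m : nat) (X : 'M[R]_m) (bb w : 'cV[R]_m) :
  X \in unitmx -> X *m w = bb -> invmx X *m bb = w.
Proof. by move=> uX <-; rewrite mulKmx. Qed.

Lemma vTB (s : R) : (vv n s)^T *m Bmat n b = brow n b *m vv n s.
Proof.
apply/matrixP => i j; rewrite !mxE; apply: eq_bigr => k _.
by rewrite !mxE mulrC.
Qed.

Lemma eval_eq (s : R) : (den_poly n a).[s] != 0 -> (den_poly n c).[s] != 0 ->
  (char_poly Mcl).[s] = (char_poly Acl).[s] * (den_poly n c).[s].
Proof.
move=> dA0 dc0.
set dA := (den_poly n a).[s]; set dc := (den_poly n c).[s].
set SA := s%:M - Amat n a; set SR := s%:M - Ar n c; set SAa := s%:M - Aa n a.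
have detSR : \det SR = dc by rewrite /SR -char_poly_eval /Ar char_poly_comp.
have detSAa : \det SAa = dA by rewrite /SAa -char_poly_eval /Aa char_poly_comp.
have detSA : \det SA = dA.
  rewrite /SA AmatE -det_tr linearB /= tr_scalar_mx trmxK.
  by rewrite -char_poly_eval char_poly_comp.
have uSA : SA \in unitmx by rewrite unitmxE unitfE detSA.
pose Mo : 'M[R]_(n + (n + n)) :=
  block_mx (Amat n a) 0 (col_mx 0 (Br R n *m Cmat R n)) (block_mx (Ar n c) 0 0 (Ar n c)).
pose BB : 'cV[R]_(n + (n + n)) := col_mx (Bmat n b) (col_mx (Br R n) 0).
pose K' : 'rV[R]_(n + (n + n)) := row_mx 0 Kf.
have McE : Mcl = Mo + BB *m K'.
  rewrite /Mcl /Mo /BB /K' mul_col_row add_block_mx !mulmx0 !addr0 add0r.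
  by [].
pose X1 := s%:M - Mo.
have X1E : X1 = block_mx SA 0 (- col_mx 0 (Br R n *m Cmat R n)) (block_mx SR 0 0 SR).
  by rewrite /X1 /Mo sub_block oppr0 sub_block !oppr0.
have detX1 : \det X1 = dA * (dc * dc) by rewrite X1E det_lblock det_lblock detSA detSR.
have uX1 : X1 \in unitmx by rewrite unitmxE unitfE detX1 !mulf_neq0.
pose X2 := s%:M - Af n a b c.
have X2E : X2 = block_mx SR 0 (- Lb n b) SAa by rewrite /X2 /Af sub_block oppr0.
have detX2 : \det X2 = dc * dA by rewrite X2E det_lblock detSR detSAa.
have uX2 : X2 \in unitmx by rewrite unitmxE unitfE detX2 !mulf_neq0.
pose w2 := dc^-1 *: vv n s.
have SRw2 : SR *m w2 = Br R n.
  by rewrite /w2 -scalemxAr /SR /Ar comp_v // scalerA mulVf // scale1r.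
have SAav : SAa *m (dA^-1 *: vv n s) = Br R n.
  by rewrite -scalemxAr /SAa /Aa comp_v // scalerA mulVf // scale1r.
pose w1 := invmx SA *m Bmat n b.
have Cw1 : Cmat R n *m w1 = dA^-1 *: (brow n b *m vv n s).
  have hC : Cmat R n = dA^-1 *: ((vv n s)^T *m SA).
    by rewrite vA // scalerA mulVf // scale1r.
  by rewrite /w1 hC -!scalemxAl mulmxA mulmxK // vTB.
pose w3 := (dA^-1 *: vv n s) *m (brow n b *m w2).
have inv1 : invmx X1 *m BB = col_mx w1 (col_mx w2 (w2 *m (Cmat R n *m w1))).
  apply: inv_apply => //; rewrite X1E mul_block_col mul0mx addr0 /w1 mulKVmx //.
  rewrite mul_block_col !mul0mx addr0 add0r mulNmx mul_col_mx mul0mx.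
  by rewrite opp_col_mx oppr0 add_col_mx add0r SRw2 [SR *m _]mulmxA SRw2 -!mulmxA addNr.
have inv2 : invmx X2 *m Bf n = col_mx w2 w3.
  apply: inv_apply => //; rewrite X2E mul_block_col mul0mx addr0 SRw2.
  rewrite /w3 mulmxA SAav mulNmx LbE -mulmxA addNr.
  by [].
have key : K' *m invmx X1 *m BB = Kf *m invmx X2 *m Bf n.
  rewrite -!mulmxA inv1 inv2 /K' mul_row_col mul0mx add0r; congr (Kf *m col_mx _ _).
  rewrite Cw1 /w3 /w2 -!scalemxAr -!scalemxAl !scalerA; congr (_ *: _); exact: mulrC.
rewrite !char_poly_eval.
have -> : s%:M - Mcl = X1 - BB *m K' by rewrite McE /X1 opprD addrA.
have -> : s%:M - Acl = X2 - Bf n *m Kf by rewrite /Acl /X2 opprD addrA.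
rewrite !det_rank1 // detX1 detX2 key; ring.
Qed.


Lemma poly_eq_ae (p q d : {poly R}) : d != 0 ->
  (forall s : R, d.[s] != 0 -> p.[s] = q.[s]) -> p = q.
Proof.
move=> d0 H; apply/eqP; rewrite -subr_eq0; apply/negPn/negP => pq.
pose r := (p - q) * d.
have r0 : r != 0 by rewrite mulf_neq0.
have rr : forall s, root r s.
  move=> s; rewrite /root /r hornerM hornerD hornerN.
  case: (eqVneq d.[s] 0) => [->|ds]; first by rewrite mulr0.
  by rewrite H // subrr mul0r.
have h1 : all (root r) [seq (i%:R : R) | i <- iota 0 (size r)].
  by apply/allP => x _; exact: rr.
have h2 : uniq [seq (i%:R : R) | i <- iota 0 (size r)].
  rewrite map_inj_uniq ?iota_uniq // => i j /eqP; rewrite eqr_nat => /eqP.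
  by [].
by have := max_poly_roots r0 h1 h2; rewrite size_map size_iota ltnn.
Qed.

Lemma charMcl : char_poly Mcl = char_poly Acl * den_poly n c.
Proof.
apply: (@poly_eq_ae _ _ (den_poly n a * den_poly n c)).
  by rewrite mulf_neq0 // monic_neq0 // monic_den.
move=> s; rewrite hornerM mulf_eq0 negb_or => /andP[h1 h2].
by rewrite hornerM eval_eq.
Qed.

Lemma closed_loopE : closed_loop n a b c Kf = fun z => Mcl *m z.
Proof.
apply: funext => z; rewrite /closed_loop /=.
rewrite -[z in RHS]vsubmxK -[dsubmx z in RHS]vsubmxK.
move: (usubmx z) (dsubmx z) => x w.
rewrite /Mcl mul_block_col mul_col_mx mul0mx mulmxDl mul_block_col.
rewrite !mul0mx addr0 add0r -!mulmxA !mul_col_mx mul0mx add_col_mx addr0.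
rewrite add_col_mx add0r.
by rewrite [Br R n *m _ + _]addrC.
Qed.

End Main.

Section Final.
Variable R : realType.

Lemma hurwitz_GAS_any (N : nat) (M : 'M[R]_N) : hurwitz_mx M -> GAS (fun z => M *m z).
Proof.
case: N M => [|N'] M H; last exact: hurwitz_GAS H.
have z0 : forall v : 'cV[R]_0, v = 0 by move=> v; exact: flatmx0.
split.
  move=> eps eps0; exists 1 => // phi _ _ t _; by rewrite (z0 (phi t)) normr0.
move=> phi _; have -> : phi = fun=> 0 by apply: funext => t; exact: z0.
exact: cvg_cst.
Qed.

End Final.

Unset Implicit Arguments.

Theorem corollary1 (R : realType) (n : nat) (a b c : nat -> R)
  (Kf : 'M[R]_(1, n + n)) :
  (1 <= n)%N ->
  coprimep (den_poly n a) (num_poly n b) ->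
  hurwitz_mx (Af n a b c + Bf n *m Kf) ->
  hurwitz_poly (den_poly n c) ->
  GAS (closed_loop n a b c Kf).
Proof.
move=> n0 _ HA Hc.
rewrite (closed_loopE a b c Kf).
apply: hurwitz_GAS_any.
rewrite /hurwitz_mx (charMcl a b c Kf n0) => z.
rewrite /cpoly (_ : (fun x : R => (x%:C)%C) = real_complex R) // rmorphM /= rootM.
by case/orP => hz; [exact: HA | exact: Hc].
Qed.
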